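(* There is an absolute constant $C$ such that the following holds. Let $\mathcal S$ be a family of subsets of $[n]$, let $w_S\ge0$ for $S\in\mathcal S$, and suppose that $q(z)=\mathrm{sgn}(-\theta+\sum_{S\in\mathcal S}w_Sz_S)$ (for $z\in\{0,1\}^{\mathcal S}$) is a $(\theta,m)$-LTF with $\theta\ge2m>0$. Let $f\colon\{0,1\}^n\to\{0,1\}$ be $f(x)=\mathrm{sgn}\big(-\theta+\sum_{S\in\mathcal S}w_S\cdot\bigvee_{i\in S}x_i\big)$. Then $R^{lin}_{1/3}(f)\le C\left(\frac{\theta}{m}\right)^4\log^2\frac{\theta}{m}$.
   Context: $\mathrm{sgn}(y)=0$ for $y<0$ and $\mathrm{sgn}(y)=1$ for $y\ge0$. A $(\theta,m)$-LTF is a function $\mathrm{sgn}(-\theta+\sum_{j} w_jz_j)$ on a Boolean cube with real weights $w_j\ge0$ and real threshold $\theta$, whose margin $m>0$ satisfies $m\le\min_{z}|-\theta+\sum_jw_jz_j|$. For $S\subseteq[n]$, $\chi_S(x)=\sum_{i\in S}x_i\pmod2$. Exact randomized $\mathbb F_2$-sketch complexity: for $f\colon\mathbb F_2^n\to\mathbb R$ and $\delta\in[0,1]$, $R^{lin}_\delta(f)$ is the smallest integer $k$ such that there exists a probability distribution over $k$-tuples of subsets $\mathbf S_1,\dots,\mathbf S_k\subseteq[n]$ and a function $g\colon\mathbb F_2^k\to\mathbb R$ with $\Pr_{\mathbf S_1,\dots,\mathbf S_k}[g(\chi_{\mathbf S_1}(x),\dots,\chi_{\mathbf S_k}(x))=f(x)]\ge1-\delta$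 for every $x\in\mathbb F_2^n$. *)

(* Defs.v *)
From mathcomp Require Import all_boot.
From Stdlib Require Import Reals ClassicalEpsilon.

Set Implicit Arguments.
Unset Strict Implicit.
Unset Printing Implicit Defensive.

Open Scope R_scope.

Definition sgn (y : R) : R := if Rle_dec 0 y then 1 else 0.

Definition b2R (b : bool) : R := if b then 1 else 0.

Definition sumR (l : seq R) : R := foldr Rplus 0 l.

Definition cube (n : nat) := {ffun 'I_n -> bool}.

Definition chi (n : nat) (A : {set 'I_n}) (x : cube n) : bool :=
  odd #|[set i in A | x i]|.

Definition ltf_form (n : nat) (F : {set {set 'I_n}}) (w : {set 'I_n} -> R)
  (theta : R) (z : {set 'I_n} -> bool) : R :=
  - theta + sumR [seq w A * b2R (z A) | A <- enum F].

(* q(z) = sgn(-theta + sum w_S z_S) is a (theta,m)-LTF: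
   nonnegative weights, margin m > 0, m <= min_z |-theta + sum w_S z_S|.
   (z ranges over all functions; only its values on F matter.) *)
Definition is_theta_m_LTF (n : nat) (F : {set {set 'I_n}}) (w : {set 'I_n} -> R)
  (theta m : R) : Prop :=
  (forall A, A \in F -> 0 <= w A) /\ 0 < m /\
  (forall z : {set 'I_n} -> bool, m <= Rabs (ltf_form F w theta z)).

Definition f_or (n : nat) (F : {set {set 'I_n}}) (w : {set 'I_n} -> R)
  (theta : R) (x : cube n) : R :=
  sgn (ltf_form F w theta (fun A => [exists i in A, x i])).

Definition sketch (n k : nat) (Ss : k.-tuple {set 'I_n}) (x : cube n) : k.-tuple bool :=
  map_tuple (fun A => chi A x) Ss.

(* A probability distribution over k-tuples of subsets of [n] is given by a
   finite list of (probability, tuple) pairs (every distribution on this finite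
   set is finitely supported). *)
Definition succ_prob (n k : nat) (D : seq (R * k.-tuple {set 'I_n}))
  (g : k.-tuple bool -> R) (f : cube n -> R) (x : cube n) : R :=
  sumR [seq (if Req_EM_T (g (sketch p.2 x)) (f x) then p.1 else 0) | p <- D].

Definition is_distr (T : Type) (D : seq (R * T)) : Prop :=
  (forall p, List.In p D -> 0 <= fst p) /\ sumR [seq p.1 | p <- D] = 1.

Definition sketchable (n : nat) (delta : R) (f : cube n -> R) (k : nat) : Prop :=
  exists (D : seq (R * k.-tuple {set 'I_n})) (g : k.-tuple bool -> R),
    is_distr D /\ forall x : cube n, 1 - delta <= succ_prob D g f x.

Definition sketchable_b (n : nat) (delta : R) (f : cube n -> R) (k : nat) : bool :=
  if excluded_middle_informative (sketchable delta f k) then true else false.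

Lemma sketchable_ex_b (n : nat) (delta : R) (f : cube n -> R) :
  (exists k, sketchable delta f k) -> exists k, sketchable_b delta f k.
Proof.
move=> [k Hk]; exists k; rewrite /sketchable_b.
by case: excluded_middle_informative.
Qed.

(* R^{lin}_delta(f): the smallest k such that a sketch of size k exists
   (set to 0 in the degenerate case where none exists, which never happens
   for delta in [0,1]). *)
Definition Rlin (n : nat) (delta : R) (f : cube n -> R) : nat :=
  match excluded_middle_informative (exists k, sketchable delta f k) with
  | left H => ex_minn (sketchable_ex_b H)
  | right _ => 0%nat
  end.

(* Main.v *)
Require Import Defs.
From mathcomp Require Import all_boot.
From Stdlib Require Import Reals.
From Stdlib Require Import Lra Classical ZArith Lia ClassicalEpsilon.
From mathcomp Require Import all_boot zify.
Open Scope R_scope.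

Lemma mem_tl (T : eqType) (b X : T) l : X \in l -> X \in b :: l.
Proof. by rewrite inE => ->; rewrite orbT. Qed.

Lemma sumR_cons (a : R) l : sumR (a :: l) = a + sumR l.
Proof. by []. Qed.

Lemma sumR_removeS (T : eqType) (l : seq T) (w : T -> R) (z : T -> bool) X :
  uniq l -> X \in l ->
  sumR [seq w a * b2R (z a) | a <- l] =
  w X * b2R (z X) + sumR [seq w a * b2R (z a && (a != X)) | a <- l].
Proof.
elim: l => [|a l IH] //= /andP[anl ul]; rewrite inE => /orP[/eqP eSa|Sl].
  subst a; rewrite eqxx andbF /= Rmult_0_r Rplus_0_l; f_equal.
  elim: l anl {IH ul} => [|b l IH2] //=; rewrite inE negb_or => /andP[bS nl].
  by rewrite eq_sym bS andbT IH2.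
rewrite IH //.
have -> : a != X by apply: contraNneq anl => ->.
rewrite andbT /=; lra.
Qed.

Lemma sumR_count (T : eqType) (l : seq T) (w : T -> R) (z : T -> bool) a :
  (forall X, X \in l -> z X -> a <= w X) ->
  INR (count z l) * a <= sumR [seq w X * b2R (z X) | X <- l].
Proof.
elim: l => [|b l IH] /= H; first lra.
have IH' := IH (fun X Sl zS => H X (mem_tl _ b _ _ Sl) zS).
rewrite plus_INR.
case zb: (z b) => /=.
  have := H b (mem_head _ _) zb; rewrite ?Rmult_plus_distr_r /=; rewrite ?[b2R true]/b2R ?[b2R false]/b2R; lra.
rewrite ?Rmult_plus_distr_r /=; rewrite ?[b2R true]/b2R ?[b2R false]/b2R; lra.
Qed.

Lemma sumR_natlow (T : eqType) (l : seq T) (w : T -> R) (z : T -> bool) (c : T -> nat) d :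
  (forall X, X \in l -> z X -> INR (c X) * d <= w X) ->
  INR (\sum_(X <- l | z X) c X) * d <= sumR [seq w X * b2R (z X) | X <- l].
Proof.
elim: l => [|b l IH] /= H; first by rewrite big_nil /=; lra.
have IH' := IH (fun X Sl zS => H X (mem_tl _ b _ _ Sl) zS).
rewrite big_cons.
case zb: (z b) => /=.
  rewrite plus_INR; have := H b (mem_head _ _) zb; rewrite ?Rmult_plus_distr_r /=; rewrite ?[b2R true]/b2R ?[b2R false]/b2R; lra.
rewrite ?Rmult_plus_distr_r /=; rewrite ?[b2R true]/b2R ?[b2R false]/b2R; lra.
Qed.

Lemma sumR_natup (T : eqType) (l : seq T) (w : T -> R) (z : T -> bool) (c : T -> nat) d :
  (forall X, X \in l -> z X -> w X <= (INR (c X) + 1) * d) ->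
  sumR [seq w X * b2R (z X) | X <- l] <=
  INR (\sum_(X <- l | z X) c X) * d + INR (count z l) * d.
Proof.
elim: l => [|b l IH] H; first by rewrite big_nil /=; lra.
have IH' := IH (fun X Sl zS => H X (mem_tl _ b _ _ Sl) zS).
rewrite big_cons (_ : count z (b :: l) = (z b + count z l)%N) // plus_INR.
rewrite [sumR _]/= .
case zb: (z b).
  rewrite plus_INR; have := H b (mem_head _ _) zb.
  change (INR (nat_of_bool true)) with 1; change (b2R true) with 1; lra.
change (INR (nat_of_bool false)) with 0; change (b2R false) with 0; lra.
Qed.

Lemma sumR_const (T : Type) (l : seq T) (c : R) :
  sumR [seq c | _ <- l] = INR (size l) * c.
Proof.
elim: l => [|b l IH]; first by rewrite /=; lra.
rewrite [sumR _]/= IH (_ : size (b :: l) = (size l).+1) // S_INR; ring.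
Qed.

Lemma sumR_ind (T : Type) (l : seq T) (a : T -> R) (b c : R) (p : pred T) :
  0 <= c -> (forall x, p x -> a x = b) ->
  INR (count p l) * c <= sumR [seq (if Req_EM_T (a x) b then c else 0) | x <- l].
Proof.
move=> c0 H; elim: l => [|y l IH]; first by rewrite /=; lra.
rewrite (_ : count p (y :: l) = (p y + count p l)%N) // plus_INR [sumR _]/=.
rewrite Rmult_plus_distr_r.
case py: (p y).
  change (INR (nat_of_bool true)) with 1.
  rewrite (H y py).
  have -> : (if Req_EM_T b b then c else 0) = c by case: Req_EM_T.
  lra.
change (INR (nat_of_bool false)) with 0.
have : 0 <= (if Req_EM_T (a y) b then c else 0) by destruct (Req_EM_T (a y) b); simpl; lra.
lra.
Qed.

Lemma sumR_ge0 (T : Type) (l : seq T) (f : T -> R) :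
  (forall x, 0 <= f x) -> 0 <= sumR (map f l).
Proof. move=> H; elim: l => [|y l IH] /=; [lra|have := H y; lra]. Qed.

Close Scope R_scope.

Lemma card_ffun_pred (aT rT : finType) (P : aT -> pred rT) :
  #|[set f : {ffun aT -> rT} | [forall x, P x (f x)]]| = \prod_(x : aT) #|P x|.
Proof.
rewrite -(@eq_card _ (family P)).
  by rewrite card_family foldrE big_map /= big_enum.
by move=> f; rewrite inE.
Qed.

Lemma card_part (T U : finType) (P : pred T) (k : T -> U) :
  #|[set x | P x]| = \sum_(u : U) #|[set x | P x & k x == u]|.
Proof.
rewrite -sum1_card (partition_big k xpredT) //.
apply: eq_bigr => u _; rewrite -sum1_card; apply: eq_bigl => x; rewrite !inE.
by [].
Qed.

Lemma coll_count (aT rT : finType) (a1 a2 : aT) : a1 != a2 ->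
  #|rT| * #|[set f : {ffun aT -> rT} | f a1 == f a2]| = #|{ffun aT -> rT}|.
Proof.
move=> a12.
pose Pu (u v : rT) (x : aT) : pred rT :=
  if x == a1 then pred1 u else if x == a2 then pred1 v else predT.
pose c := \prod_(x : aT) (if x == a1 then 1 else if x == a2 then 1 else #|rT|).
have cnt u v : #|[set f : {ffun aT -> rT} | [forall x, Pu u v x (f x)]]| = c.
  rewrite card_ffun_pred; apply: eq_bigr => x _; rewrite /Pu.
  case: (x == a1); first by rewrite card1.
  case: (x == a2); first by rewrite card1.
  by apply: eq_card => y.
have key u v : [set f : {ffun aT -> rT} | (f a1 == u) & f a2 == v] =
               [set f : {ffun aT -> rT} | [forall x, Pu u v x (f x)]].
  apply/setP => f; rewrite !inE; apply/andP/forallP.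
    move=> [/eqP e1 /eqP e2] x; rewrite /Pu.
    case: eqP => [->|_]; first by rewrite /= e1.
    by case: eqP => [->|_]; first by rewrite /= e2.
  move=> H; have := H a1; have := H a2; rewrite /Pu eqxx (negbTE a12) eq_sym.
  by rewrite (negbTE a12) eqxx => h2 h1.
have -> : #|[set f : {ffun aT -> rT} | f a1 == f a2]| = #|rT| * c.
  rewrite (@card_part _ _ _ (fun f : {ffun aT -> rT} => f a1)).
  rewrite -sum_nat_const; apply: eq_bigr => u _.
  rewrite -(cnt u u) -key; apply: eq_card => f; rewrite !inE.
  by case: (f a1 =P u) => [->|_]; rewrite ?andbT ?andbF // eq_sym.
have -> : #|{ffun aT -> rT}| = #|[set f : {ffun aT -> rT} | true]|.
  by apply: eq_card => f; rewrite inE.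
rewrite (@card_part _ _ _ (fun f : {ffun aT -> rT} => f a1)).
rewrite (eq_bigr (fun _ => #|rT| * c)); first by rewrite sum_nat_const mulnA.
move=> u _.
rewrite (@card_part _ _ _ (fun f : {ffun aT -> rT} => f a2)).
rewrite (eq_bigr (fun _ => c)); first by rewrite sum_nat_const.
move=> v _.
by rewrite -(cnt u v) -key; apply: eq_card => f; rewrite !inE.
Qed.


Lemma prodc (T : finType) (k : nat) : \prod_(i : T) k = k ^ #|T|.
Proof. by rewrite -prod_nat_const. Qed.
Lemma prodo (r k : nat) : \prod_(i < r) k = k ^ r.
Proof. by rewrite prodc card_ord. Qed.

Lemma chi_half n (E : {set 'I_n}) (x : cube n) i : i \in E -> x i ->
  2 * #|[set R : {set 'I_n} | ~~ chi (R :&: E) x]| = #|{set 'I_n}|.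
Proof.
move=> iE xi.
pose tog (R : {set 'I_n}) := [set j | (j \in R) != (j == i)].
have togK : involutive tog.
  move=> R; apply/setP => j; rewrite !inE.
  by case: (j \in R); case: (j == i).
have oddtog (A : {set 'I_n}) : odd #|[set j | (j \in A) != (j == i)]| = ~~ odd #|A|.
  case iA: (i \in A).
    have -> : [set j | (j \in A) != (j == i)] = A :\ i.
      apply/setP => j; rewrite !inE; case: (j =P i) => [->|ne]; rewrite ?iA ?eqxx //=.
      by case: (j \in A).
    by rewrite [in RHS](cardsD1 i A) iA /= negbK.
  have -> : [set j | (j \in A) != (j == i)] = i |: A.
    apply/setP => j; rewrite !inE; case: (j =P i) => [->|ne]; rewrite ?iA ?eqxx //=.
    by case: (j \in A).
  by rewrite cardsU1 iA.
have chitog R : chi (tog R :&: E) x = ~~ chi (R :&: E) x.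
  rewrite /chi -oddtog; congr (odd _); apply: eq_card => j; rewrite !inE.
  case: (j =P i) => [->|_]; rewrite ?iE ?xi /=.
    by case: (i \in R).
  by case: (j \in R); case: (j \in E); case: (x j).
have e1 : #|[set R : {set 'I_n} | ~~ chi (R :&: E) x]| =
          #|[set R : {set 'I_n} | chi (R :&: E) x]|.
  have -> : [set R : {set 'I_n} | ~~ chi (R :&: E) x] =
            tog @: [set R : {set 'I_n} | chi (R :&: E) x].
    apply/setP => R; rewrite inE; apply/idP/imsetP.
      by move=> H; exists (tog R); rewrite ?inE ?chitog ?togK ?negbK.
    by move=> [R' ]; rewrite inE => H ->; rewrite chitog H.
  by rewrite (card_imset _ (can_inj togK)).
have -> : #|{set 'I_n}| = #|[set R : {set 'I_n} | true]|.
  by apply: eq_card => R; rewrite inE.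
rewrite [in RHS](@card_part _ _ _ (fun R : {set 'I_n} => chi (R :&: E) x)) big_bool /=.
rewrite mul2n -addnn {1}e1; congr (_ + _); apply: eq_card => R; rewrite !inE.
  by case: (chi _ _).
by case: (chi _ _).
Qed.

Lemma nodet_count n (U : finType) (r : nat) (j0 : U) (E0 : {set 'I_n}) (x : cube n) i :
  i \in E0 -> x i ->
  2 ^ r * #|[set R : {ffun U * 'I_r -> {set 'I_n}} |
              ~~ [exists l : 'I_r, chi (R (j0, l) :&: E0) x]]| =
  #|{ffun U * 'I_r -> {set 'I_n}}|.
Proof.
move=> iE xi.
pose a := #|[set S : {set 'I_n} | ~~ chi (S :&: E0) x]|.
pose M := #|{set 'I_n}|.
have haM : 2 * a = M by apply: chi_half iE xi.
pose P (jl : U * 'I_r) : pred {set 'I_n} :=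
  if jl.1 == j0 then [pred S | ~~ chi (S :&: E0) x] else predT.
have -> : [set R : {ffun U * 'I_r -> {set 'I_n}} |
              ~~ [exists l : 'I_r, chi (R (j0, l) :&: E0) x]] =
          [set R : {ffun U * 'I_r -> {set 'I_n}} | [forall jl, P jl (R jl)]].
  apply/setP => R; rewrite !inE negb_exists; apply/forallP/forallP.
    move=> H [j l]; rewrite /P /=; case: eqP => [->|] //=; exact: H.
  by move=> H l; have := H (j0, l); rewrite /P /= eqxx.
rewrite card_ffun_pred card_ffun card_prod card_ord.
rewrite (eq_bigr (fun jl : U * 'I_r => if jl.1 == j0 then a else M)); last first.
  move=> [j l] _; rewrite /P /=; case: eqP => _.
    by apply: eq_card => S; rewrite inE.
  by apply: eq_card => S.
rewrite -(pair_bigA _ (fun (j : U) (l : 'I_r) => if (j, l).1 == j0 then a else M)) /=.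
rewrite (bigD1 j0) //= eqxx.
have -> : \prod_(i0 | i0 != j0) \prod_(j < r) (if i0 == j0 then a else M) =
          \prod_(i0 | i0 != j0) M ^ r.
  by apply: eq_bigr => i0 /negbTE ->; rewrite prodo.
rewrite prodo mulnA -expnMn haM.
have -> : #|{set 'I_n}| ^ (#|U| * r) = M ^ r * \prod_(i0 | i0 != j0) M ^ r.
  by rewrite mulnC expnM -prodc (bigD1 j0).
by [].
Qed.

Lemma count_card (T : finType) (p : pred T) : count p (enum T) = #|[set x | p x]|.
Proof.
rewrite -sum1_count big_enum_cond -sum1_card; apply: eq_bigl => y; by rewrite inE.
Qed.

Lemma sum_const_cond (T : finType) (P : pred T) k :
  \sum_(i | P i) k = #|[set i | P i]| * k.
Proof. rewrite -sum_nat_const; apply: eq_bigl => i; by rewrite inE. Qed.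

Lemma card_U_le (T : finType) (A B : {set T}) : #|A :|: B| <= #|A| + #|B|.
Proof. rewrite cardsU; exact: leq_subr. Qed.

Lemma card_bigcup_le (T I : finType) (P : pred I) (S : I -> {set T}) :
  #|\bigcup_(i | P i) S i| <= \sum_(i | P i) #|S i|.
Proof.
elim/big_rec2: _ => [|i y1 y2 _ IH]; first by rewrite cards0.
apply: leq_trans (card_U_le _ _ _) _; by rewrite leq_add2l.
Qed.

Lemma card_pair_slice (T1 T2 : finType) (P : T1 -> T2 -> bool) :
  #|[set o : T1 * T2 | P o.1 o.2]| = \sum_(a : T1) #|[set b | P a b]|.
Proof.
rewrite (@card_part _ _ _ (fun o : T1 * T2 => o.1)); apply: eq_bigr => a _.
have -> : [set o : T1 * T2 | P o.1 o.2 & o.1 == a] = (pair a) @: [set b | P a b].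
  apply/setP => [[a' b]]; rewrite !inE /=; apply/andP/imsetP.
    by move=> [H /eqP e]; subst a'; exists b; rewrite ?inE.
  by move=> [b' ]; rewrite inE => H [-> ->]; rewrite H eqxx.
by rewrite card_imset // => b1 b2 [].
Qed.

Open Scope R_scope.

Section Main.
Variables (n : nat) (F : {set {set 'I_n}}) (w : {set 'I_n} -> R) (theta m : R).
Hypotheses (HL : is_theta_m_LTF F w theta m) (Hm2 : 2 * m <= theta) (Hm : 0 < m).
Variable N : nat.
Hypotheses (HN : theta / m <= INR N) (HN2 : (2 <= N)%N).

Definition W (z : {set 'I_n} -> bool) := sumR [seq w A * b2R (z A) | A <- enum F].

Lemma margin z : W z <= theta - m \/ theta + m <= W z.
Proof.
case: HL => _ [_ H]; have := H z; rewrite /ltf_form -/(W z).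
unfold Rabs; destruct Rcase_abs; lra.
Qed.

Lemma wpos A : A \in F -> 0 <= w A.
Proof. by case: HL => H _; apply: H. Qed.

Lemma W_ext z1 z2 : (forall A, A \in F -> z1 A = z2 A) -> W z1 = W z2.
Proof.
move=> H; rewrite /W; congr sumR; apply/eq_in_map => A; rewrite mem_enum => AF.
by rewrite H.
Qed.

Lemma count_memF (A0 : {set {set 'I_n}}) : A0 \subset F ->
  count (mem A0) (enum F) = #|A0|.
Proof.
move=> sub; rewrite -sum1_count big_enum_cond -sum1_card; apply: eq_bigl => A.
have -> : mem A0 A = (A \in A0) by [].
by case AA0: (A \in A0); rewrite ?andbT ?andbF // (subsetP sub).
Qed.

Lemma sum_enumF (A0 : {set {set 'I_n}}) (c : {set 'I_n} -> nat) : A0 \subset F ->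
  \sum_(A <- enum F | A \in A0) c A = \sum_(A in A0) c A.
Proof.
move=> sub; rewrite big_enum_cond; apply: eq_bigl => A.
by case AA0: (A \in A0); rewrite ?andbT ?andbF // (subsetP sub).
Qed.

Lemma Npos : 0 < INR N.
Proof. apply: lt_0_INR; apply/ltP; lia. Qed.

Definition delta := m / INR N.
Definition Kc := (N * N.+1)%N.
Definition clsZ A := (up (w A / delta) - 1)%Z.
Definition cls A : nat := minn (Z.to_nat (clsZ A)) Kc.

Lemma delta_pos : 0 < delta.
Proof. have := Npos; rewrite /delta => ?; apply: Rdiv_lt_0_compat; lra. Qed.

Lemma clsZ_prop A : 0 <= w A ->
  (0 <= clsZ A)%Z /\ IZR (clsZ A) * delta <= w A /\ w A < (IZR (clsZ A) + 1) * delta.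
Proof.
move=> w0; have dp := delta_pos.
have [h1 h2] := archimed (w A / delta).
have y0 : 0 <= w A / delta by apply: Rmult_le_pos => //; apply: Rlt_le; apply: Rinv_0_lt_compat.
have eq : w A = (w A / delta) * delta by field; lra.
rewrite /clsZ minus_IZR; split.
  have : (0 < up (w A / delta))%Z by apply: lt_IZR; lra.
  lia.
split.
  rewrite {2}eq; apply: Rmult_le_compat_r; lra.
rewrite {1}eq; apply: Rmult_lt_compat_r; lra.
Qed.

Lemma cls_le A : (cls A <= Kc)%N.
Proof. exact: geq_minr. Qed.

Lemma cls_low A : 0 <= w A -> INR (cls A) * delta <= w A.
Proof.
move=> w0; have [z0 [h1 h2]] := clsZ_prop A w0; have dp := delta_pos.
apply: Rle_trans h1; apply: Rmult_le_compat_r; first lra.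
rewrite -(Z2Nat.id _ z0) -INR_IZR_INZ; apply: le_INR; apply/leP; exact: geq_minl.
Qed.

Lemma cls_high A : 0 <= w A -> (cls A < Kc)%N -> w A <= (INR (cls A) + 1) * delta.
Proof.
move=> w0 lt; have [z0 [h1 h2]] := clsZ_prop A w0.
have -> : cls A = Z.to_nat (clsZ A).
  by move: lt; rewrite /cls /minn; case: ifP => // _; rewrite ltnn.
by rewrite INR_IZR_INZ Z2Nat.id //; lra.
Qed.

Lemma cls_cap A : cls A = Kc -> theta + m <= INR (cls A) * delta.
Proof.
move=> ->; rewrite /Kc /delta mult_INR S_INR.
have np := Npos.
have -> : INR N * (INR N + 1) * (m / INR N) = (INR N + 1) * m by field; lra.
have : theta <= INR N * m.
  have -> : theta = theta / m * m by field; lra.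
  by apply: Rmult_le_compat_r; lra.
lra.
Qed.


Definition B := (6 * N * N)%N.
Definition r := (trunc_log 2 (6 * N)).+1.
Local Notation Bk := ('I_B * 'I_Kc.+1)%type.
Local Notation J := (Bk * 'I_r)%type.
Local Notation Htype := {ffun {set 'I_n} -> 'I_B}.
Local Notation Rtype := {ffun J -> {set 'I_n}}.
Local Notation Om := (Htype * Rtype)%type.

Definition phi (h : Htype) (A : {set 'I_n}) : Bk := (h A, inord (cls A)).
Definition E (h : Htype) (j : Bk) : {set 'I_n} := \bigcup_(A in F | phi h A == j) A.
Definition Tup (o : Om) : #|{: J}|.-tuple {set 'I_n} :=
  [tuple (o.2 (enum_val i) :&: E o.1 (enum_val i).1) | i < #|{: J}|].
Definition det (x : cube n) (o : Om) (j : Bk) :=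
  [exists l : 'I_r, chi (o.2 (j, l) :&: E o.1 j) x].
Definition Vn (v : #|{: J}|.-tuple bool) : nat :=
  \sum_(j : Bk) (j.2 : nat) * [exists l : 'I_r, tnth v (enum_rank (j, l))].
Definition gdec (v : #|{: J}|.-tuple bool) : R :=
  if Rle_dec (INR (Vn v) * delta) (theta - m) then 0 else 1.
Definition hitz (x : cube n) := fun A : {set 'I_n} => [exists i in A, x i].

Lemma Vn_sketch x o : Vn (sketch (Tup o) x) = \sum_(j : Bk) (j.2 : nat) * det x o j.
Proof.
apply: eq_bigr => j _; rewrite /det.
have -> : [exists l : 'I_r, tnth (sketch (Tup o) x) (enum_rank (j, l))] =
          [exists l : 'I_r, chi (o.2 (j, l) :&: E o.1 j) x]; last by [].
apply: eq_existsb => l.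
by rewrite /sketch tnth_map tnth_mktuple enum_rankK.
Qed.

Lemma phi2 h A : (phi h A).2 = cls A :> nat.
Proof. by rewrite /phi /= inordK // ltnS cls_le. Qed.

Lemma Vn_f0 x o : (\sum_(j : Bk) (j.2 : nat) * det x o j <=
                   \sum_(A in F | hitz x A) cls A)%N.
Proof.
rewrite (partition_big (phi o.1) xpredT) //.
apply: leq_sum => j _.
case dj: (det x o j); last by rewrite muln0.
rewrite muln1.
move: dj => /existsP [l]; rewrite /chi => /odd_gt0; rewrite card_gt0 => /set0Pn [i].
rewrite !inE => /andP [/andP [_ iE] xi].
move: iE => /bigcupP [A /andP [AF /eqP pA] iA].
rewrite (bigD1 A) /=; last by rewrite AF /= /hitz; apply/andP; split; [apply/existsP; exists i; rewrite iA|rewrite pA].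
by rewrite -pA phi2 leq_addr.
Qed.

Lemma f0 x o : W (hitz x) <= theta - m -> gdec (sketch (Tup o) x) = 0.
Proof.
move=> Hw; rewrite /gdec Vn_sketch; case: Rle_dec => // [[]].
apply: Rle_trans Hw; apply: Rle_trans (_ : INR (\sum_(A <- enum F | hitz x A) cls A) * delta <= _).
  have dp := delta_pos.
  apply: Rmult_le_compat_r; first lra.
  apply: le_INR; apply/leP; rewrite big_enum_cond; exact: Vn_f0.
apply: sumR_natlow => A; rewrite mem_enum => AF _; apply: cls_low; exact: wpos.
Qed.

Definition Hx (x : cube n) := [set A in F | hitz x A].

Lemma Vn_f1 x (o : Om) (A0 : {set {set 'I_n}}) :
  {in A0 &, injective o.1} -> (forall A, A \in A0 -> det x o (phi o.1 A)) ->
  (\sum_(A in A0) cls A <= \sum_(j : Bk) (j.2 : nat) * det x o j)%N.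
Proof.
move=> inj hdet.
have injp : {in A0 &, injective (phi o.1)}.
  by move=> A1 A2 h1 h2 [/(inj _ _ h1 h2)].
rewrite -(eq_bigr _ (fun A _ => phi2 o.1 A)) -(big_imset (fun j : Bk => (j.2 : nat)) injp) /=.
rewrite [X in (_ <= X)%N](bigID (mem (phi o.1 @: A0))) /=.
apply: leq_trans (leq_addr _ _).
rewrite big_mkcond /= [X in (_ <= X)%N]big_mkcond /=.
apply: leq_sum => j _.
case jin: (j \in phi o.1 @: A0) => //.
move: jin => /imsetP [A AA0 ->].
by rewrite hdet // muln1.
Qed.

Lemma f1 x (o : Om) (A0 : {set {set 'I_n}}) :
  A0 \subset Hx x -> theta + m <= W (mem A0) -> (#|A0| <= N)%N ->
  {in A0 &, injective o.1} -> (forall A, A \in A0 -> det x o (phi o.1 A)) ->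
  gdec (sketch (Tup o) x) = 1.
Proof.
move=> sub HW cardA inj hdet.
have subF : A0 \subset F.
  by apply/subsetP => A /(subsetP sub); rewrite inE => /andP [].
have dp := delta_pos.
have HV := @Vn_f1 x o A0 inj hdet.
have HV' : INR (\sum_(A in A0) cls A) * delta <= INR (Vn (sketch (Tup o) x)) * delta.
  by apply: Rmult_le_compat_r; [lra|]; apply: le_INR; apply/leP; rewrite Vn_sketch.
rewrite /gdec; case: Rle_dec => // H; exfalso.
case: (boolP [exists A in A0, cls A == Kc]).
  move=> /existsP [A /andP [AA0 /eqP cA]].
  have := cls_cap A cA.
  have : INR (cls A) * delta <= INR (\sum_(A in A0) cls A) * delta.
    apply: Rmult_le_compat_r; [lra|]; apply: le_INR; apply/leP.
    by rewrite (bigD1 A) //= leq_addr.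
  lra.
rewrite negb_exists => /forallP hall.
have Hc : forall X, X \in enum F -> mem A0 X -> w X <= (INR (cls X) + 1) * delta.
  move=> X; rewrite mem_enum => XF XA; apply: (cls_high X (wpos X XF)).
  rewrite ltn_neqAle cls_le andbT; have := hall X; by rewrite (_ : X \in A0 = true).
have Hup := @sumR_natup _ (enum F) w (mem A0) cls delta Hc.
rewrite count_memF // in Hup.
have e : \sum_(X <- enum F | mem A0 X) cls X = \sum_(A in A0) cls A by apply: sum_enumF.
rewrite e in Hup.
have : INR #|A0| * delta <= m.
  have -> : m = INR N * delta by rewrite /delta; field; have := Npos; lra.
  apply: Rmult_le_compat_r; [lra|]; apply: le_INR; apply/leP; exact: cardA.
rewrite /W in HW.
have := Rle_trans _ _ _ HW Hup. lra.
Qed.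

Lemma margin_lo z : ~ (theta + m <= W z) -> W z <= theta - m.
Proof. by case: (margin z). Qed.

Lemma NmT : theta <= INR N * m.
Proof.
have -> : theta = theta / m * m by field; lra.
by apply: Rmult_le_compat_r; lra.
Qed.

Lemma exA0 x : theta + m <= W (hitz x) ->
  exists A0 : {set {set 'I_n}},
    [/\ A0 \subset Hx x, theta + m <= W (mem A0) & (#|A0| <= N)%N].
Proof.
move=> hW.
have eW : W (mem (Hx x)) = W (hitz x).
  by apply: W_ext => A AF; rewrite /Hx /= inE AF.
suff key : forall k (A : {set {set 'I_n}}), (#|A| <= k)%N -> A \subset Hx x ->
    theta + m <= W (mem A) ->
    exists A0 : {set {set 'I_n}},
      [/\ A0 \subset Hx x, theta + m <= W (mem A0) & (#|A0| <= N)%N].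
  by apply: (key #|Hx x| (Hx x)) => //; rewrite eW.
elim => [|k IH] A cA sub hA.
  by exists A; split => //; lia.
case: (leqP #|A| N) => [le|gt]; first by exists A.
have subF : A \subset F.
  by apply/subsetP => X /(subsetP sub); rewrite inE => /andP [].
have cD X : X \in A -> #|A :\ X| = (#|A| - 1)%N.
  by move=> XA; rewrite [in RHS](cardsD1 X A) XA; lia.
destruct (classic (exists X, X \in A /\ theta + m <= W (mem (A :\ X)))) as [[X [XA hX]] | nX].
  apply: (IH (A :\ X)) => //.
    by rewrite cD //; lia.
  by apply: subset_trans sub; apply: subD1set.
exfalso.
have lowX : forall X, X \in A -> W (mem (A :\ X)) <= theta - m.
  move=> X XA; apply: margin_lo => h; apply: nX; by exists X.
have w2 : forall X, X \in A -> 2 * m <= w X.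
  move=> X XA.
  have XF : X \in F by apply: (subsetP subF).
  have XeF : X \in enum F by rewrite mem_enum.
  have er := @sumR_removeS _ (enum F) w (mem A) X (enum_uniq F) XeF.
  have e2 : sumR [seq w a * b2R (mem A a && (a != X)) | a <- enum F] = W (mem (A :\ X)).
    apply: W_ext => a _; by rewrite /= in_setD1 andbC.
  rewrite e2 (_ : mem A X = true) // in er.
  have := lowX X XA; rewrite /W in hA er |- *; change (b2R true) with 1 in er.
  move=> hh; rewrite er in hA; lra.
have /card_gt0P [X0 X0A] : (0 < #|A|)%N by lia.
have hX0 := lowX X0 X0A.
have subF0 : A :\ X0 \subset F by apply: subset_trans subF; apply: subD1set.
have low := @sumR_count _ (enum F) w (mem (A :\ X0)) (2 * m)
   (fun X _ XA => w2 X (subsetP (subD1set A X0) X XA)).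
rewrite count_memF // cD // in low.
have : INR N * (2 * m) <= INR (#|A| - 1) * (2 * m).
  apply: Rmult_le_compat_r; [lra|]; apply: le_INR; apply/leP; lia.
have := NmT.
rewrite /W in hX0.
have := Rle_trans _ _ _ low hX0.
lra.
Qed.

Definition good x (A0 : {set {set 'I_n}}) (o : Om) :=
  [forall A1 in A0, forall A2 in A0, (o.1 A1 == o.1 A2) ==> (A1 == A2)] &&
  [forall A in A0, det x o (phi o.1 A)].

Lemma Bpos : (0 < B)%N.
Proof. rewrite /B; lia. Qed.

Lemma r_big : (6 * N < 2 ^ r)%N.
Proof. exact: trunc_log_ltn. Qed.

Lemma coll_Om (A1 A2 : {set 'I_n}) : A1 != A2 ->
  (B * #|[set o : Om | o.1 A1 == o.1 A2]| = #|{: Om}|)%N.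
Proof.
move=> ne.
have -> : [set o : Om | o.1 A1 == o.1 A2] =
          setX [set h : Htype | h A1 == h A2] [set: Rtype].
  by apply/setP => o; rewrite !inE andbT.
rewrite cardsX cardsT mulnA card_prod.
have := @coll_count {set 'I_n} 'I_B A1 A2 ne; rewrite card_ord => ->.
by [].
Qed.

Lemma nodet_Om x (A : {set 'I_n}) : A \in Hx x ->
  (2 ^ r * #|[set o : Om | ~~ det x o (phi o.1 A)]| = #|{: Om}|)%N.
Proof.
rewrite inE => /andP [AF /existsP [i /andP [iA xi]]].
rewrite (@card_pair_slice _ _ (fun (h : Htype) (R : Rtype) => ~~ det x (h, R) (phi h A))).
rewrite big_distrr /= card_prod -sum_nat_const.
apply: eq_bigr => h _.
have iE : i \in E h (phi h A).
  by apply/bigcupP; exists A => //; rewrite AF eqxx.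
exact: (@nodet_count n Bk r (phi h A) (E h (phi h A)) x i iE xi).
Qed.

Lemma bad_count x (A0 : {set {set 'I_n}}) : A0 \subset Hx x -> (#|A0| <= N)%N ->
  (3 * #|[set o : Om | ~~ good x A0 o]| <= #|{: Om}|)%N.
Proof.
move=> sub cardA.
pose D := fun p : {set 'I_n} * {set 'I_n} => [&& p.1 \in A0, p.2 \in A0 & p.1 != p.2].
set U1 := \bigcup_(p | D p) [set o : Om | o.1 p.1 == o.1 p.2].
set U2 := \bigcup_(A in A0) [set o : Om | ~~ det x o (phi o.1 A)].
have sb : [set o : Om | ~~ good x A0 o] \subset U1 :|: U2.
  apply/subsetP => o; rewrite inE /good negb_and => /orP [].
    rewrite negb_forall => /existsP [A1]; rewrite negb_imply => /andP [A1in].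
    rewrite negb_forall => /existsP [A2]; rewrite negb_imply => /andP [A2in].
    rewrite negb_imply => /andP [e ne].
    apply/setUP; left; apply/bigcupP; exists (A1, A2); last by rewrite inE.
    by rewrite /D /= A1in A2in ne.
  rewrite negb_forall => /existsP [A]; rewrite negb_imply => /andP [Ain nd].
  by apply/setUP; right; apply/bigcupP; exists A; rewrite ?inE.
set S1 := \sum_(p | D p) #|[set o : Om | o.1 p.1 == o.1 p.2]|.
set S2 := \sum_(A in A0) #|[set o : Om | ~~ det x o (phi o.1 A)]|.
have hbad : (#|[set o : Om | ~~ good x A0 o]| <= S1 + S2)%N.
  apply: leq_trans (subset_leq_card sb) _.
  apply: leq_trans (card_U_le _ _ _) _.
  by apply: leq_add; apply: card_bigcup_le.
have h1 : (B * S1 <= N * N * #|{: Om}|)%N.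
  rewrite /S1 big_distrr /=.
  rewrite (eq_bigr (fun _ => #|{: Om}|)); last first.
    by move=> [A1 A2] /and3P [_ _ ne]; apply: coll_Om.
  rewrite sum_const_cond leq_mul2r; apply/orP; right.
  apply: leq_trans (_ : #|setX A0 A0| <= _)%N.
    apply: subset_leq_card; apply/subsetP => [[A1 A2]]; rewrite !inE /D /=.
    by case/and3P => -> ->.
  by rewrite cardsX leq_mul.
have h2 : (2 ^ r * S2 <= N * #|{: Om}|)%N.
  rewrite /S2 big_distrr /=.
  rewrite (eq_bigr (fun _ => #|{: Om}|)); last first.
    by move=> A Ain; apply: nodet_Om; apply: (subsetP sub).
  by rewrite sum_nat_const leq_mul2r cardA orbT.
have rb := r_big.
have h1' : (N * N * (6 * S1) <= N * N * #|{: Om}|)%N.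
  by move: h1; rewrite /B; rewrite mulnCA !mulnA.
have h2' : (N * (6 * S2) <= N * #|{: Om}|)%N.
  apply: leq_trans _ h2; rewrite mulnA leq_mul2r; apply/orP; right; rewrite mulnC; exact: ltnW.
have NN : (0 < N * N)%N by lia.
have N0 : (0 < N)%N by lia.
rewrite leq_pmul2l // in h1'.
rewrite leq_pmul2l // in h2'.
lia.
Qed.

Definition Dl := [seq (1 / INR #|{: Om}|, Tup o) | o <- enum {: Om}].

Lemma Om_pos : (0 < #|{: Om}|)%N.
Proof.
apply/card_gt0P; exists ([ffun _ => Ordinal Bpos], [ffun _ => set0]); by [].
Qed.

Lemma Om_posR : 0 < INR #|{: Om}|.
Proof. apply: lt_0_INR; apply/ltP; exact: Om_pos. Qed.

Lemma Dl_distr : is_distr Dl.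
Proof.
have hp := Om_posR.
split.
  move=> p; rewrite /Dl => /List.in_map_iff [o [<- _]] /=.
  apply: Rmult_le_pos; [lra|]; apply: Rlt_le; apply: Rinv_0_lt_compat; lra.
rewrite /Dl -map_comp /comp /= sumR_const -cardE /Rdiv Rmult_1_l Rinv_r //.
apply: not_0_INR; apply/eqP; rewrite -lt0n; apply/card_gt0P.
by exists ([ffun _ => Ordinal Bpos], [ffun _ => set0]).
Qed.

Lemma good_split x A0 :
  (#|[set o : Om | good x A0 o]| + #|[set o : Om | ~~ good x A0 o]| = #|{: Om}|)%N.
Proof.
have -> : #|{: Om}| = #|[set o : Om | true]| by apply: eq_card => o; rewrite inE.
rewrite [in RHS](@card_part _ _ _ (good x A0)) big_bool /=.
by apply: f_equal2; apply: eq_card => o; rewrite !inE; case: (good x A0 o).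
Qed.

Lemma succ x : 1 - 1 / 3 <= succ_prob Dl gdec (f_or F w theta) x.
Proof.
have hp := Om_posR.
rewrite /succ_prob /Dl -map_comp.
have fx : f_or F w theta x = sgn (- theta + W (hitz x)) by [].
case: (margin (hitz x)) => hw.
  have f0x : f_or F w theta x = 0.
    by rewrite fx /sgn; case: Rle_dec => // h; lra.
  apply: Rle_trans (@sumR_ind _ (enum {: Om}) _ _ (1 / INR #|{: Om}|) predT _ _).
  - rewrite count_predT -cardE.
    have -> : INR #|{: Om}| * (1 / INR #|{: Om}|) = 1 by field; lra.
    lra.
  - apply: Rmult_le_pos; [lra|]; apply: Rlt_le; apply: Rinv_0_lt_compat; lra.
  - by move=> o _ /=; rewrite f0x; apply: f0.
have f1x : f_or F w theta x = 1.
  by rewrite fx /sgn; case: Rle_dec => // h; lra.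
have [A0 [sub hA0 cA0]] := exA0 x hw.
apply: Rle_trans (@sumR_ind _ (enum {: Om}) _ _ (1 / INR #|{: Om}|) (good x A0) _ _).
- rewrite count_card.
  have hb := bad_count x A0 sub cA0.
  have hs := good_split x A0.
  have hg : (2 * #|{: Om}| <= 3 * #|[set o : Om | good x A0 o]|)%N by lia.
  have hgR : 2 * INR #|{: Om}| <= 3 * INR #|[set o : Om | good x A0 o]|.
    have e2 : INR 2 = 2 by rewrite /=; lra.
    have e3 : INR 3 = 3 by rewrite /=; lra.
    rewrite -e2 -e3 -!mult_INR; apply: le_INR; apply/leP; exact: hg.
  have e : INR #|[set o : Om | good x A0 o]| * (1 / INR #|{: Om}|) =
           INR #|[set o : Om | good x A0 o]| / INR #|{: Om}| by field; lra.
  rewrite e.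
  apply: (Rmult_le_reg_r (INR #|{: Om}|)) => //.
  have -> : INR #|[set o : Om | good x A0 o]| / INR #|{: Om}| * INR #|{: Om}| =
            INR #|[set o : Om | good x A0 o]| by field; lra.
  lra.
- apply: Rmult_le_pos; [lra|]; apply: Rlt_le; apply: Rinv_0_lt_compat; lra.
- move=> o /andP [hinj hdet] /=; rewrite f1x.
  apply: (f1 x o A0 sub hA0 cA0).
    move=> A1 A2 h1 h2 e.
    by move: hinj => /forallP /(_ A1); rewrite h1 /= => /forallP /(_ A2); rewrite h2 e eqxx /= => /eqP.
  by move=> A Ain; move: hdet => /forallP /(_ A); rewrite Ain.
Qed.

Lemma sketchable_main : sketchable (1 / 3) (f_or F w theta) #|{: J}|.
Proof. exists Dl, gdec; split; [exact: Dl_distr| exact: succ]. Qed.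

End Main.

Lemma expn_pow (a b : nat) : expn a b = Nat.pow a b.
Proof. elim: b => [|b IH] //. rewrite expnS IH /=. by rewrite mulnE. Qed.

Lemma ln_le' x y : 0 < x -> x <= y -> ln x <= ln y.
Proof.
move=> x0 [h|->]; last lra.
by apply: Rlt_le; apply: ln_increasing.
Qed.

Lemma Rlin_le n (d : R) (f : cube n -> R) k : sketchable d f k -> (Rlin d f <= k)%N.
Proof.
move=> sk; rewrite /Rlin; case: excluded_middle_informative => [H|H]; last first.
  by exfalso; apply: H; exists k.
case: ex_minnP => k' _ hmin; apply: hmin; rewrite /sketchable_b.
by case: excluded_middle_informative.
Qed.

Lemma r_bound (N : nat) (t : R) : 2 <= t -> INR N <= t + 1 -> (0 < N)%N ->
  INR (trunc_log 2 (6 * N)).+1 <= 24 * (ln t) ^ 2.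
Proof.
move=> t2 hN N0.
set e := trunc_log 2 (6 * N).
have he : (2 ^ e <= 6 * N)%N by apply: trunc_logP => //; lia.
have l2 := ln_lt_2.
have Lt : ln 2 <= ln t by apply: ln_le'; lra.
have h1 : INR e * ln 2 <= ln (9 * t).
  rewrite -ln_pow; last lra.
  apply: ln_le'; first by apply: pow_lt; lra.
  have : INR (2 ^ e) <= INR (6 * N) by apply: le_INR; apply/leP.
  rewrite expn_pow pow_INR mult_INR /=.
  move=> h; have e2 : 1 + 1 = 2 by lra.
  rewrite e2 in h; lra.
rewrite ln_mult in h1; try lra.
have h9 : ln 9 <= 4 * ln 2.
  have -> : 4 * ln 2 = ln (2 ^ 4) by rewrite ln_pow; [rewrite /=; lra|lra].
  apply: ln_le'; lra.
have hL : ln t > / 2 by lra.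
have : INR e <= 4 + 2 * ln t.
  have : INR e * ln 2 <= (4 + 2 * ln t) * ln 2 by nra.
  move=> h; apply: (Rmult_le_reg_r (ln 2)); lra.
rewrite S_INR.
nra.
Qed.

Theorem mainTheorem10 :
  exists C : R,
  forall (n : nat) (F : {set {set 'I_n}}) (w : {set 'I_n} -> R) (theta m : R),
    is_theta_m_LTF F w theta m ->
    2 * m <= theta -> 0 < m ->
    INR (Rlin (1 / 3) (f_or F w theta)) <=
      C * (theta / m) ^ 4 * (ln (theta / m)) ^ 2.
Proof.
exists 1296 => n F w theta m HL Hm2 Hm.
set t := theta / m.
have t2 : 2 <= t.
  rewrite /t; apply: (Rmult_le_reg_r m) => //.
  have -> : theta / m * m = theta by field; lra.
  lra.
pose N := Z.to_nat (up t).
have [a1 a2] := archimed t.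
have upos : (0 <= up t)%Z by apply: le_IZR; lra.
have eN : INR N = IZR (up t) by rewrite /N INR_IZR_INZ Z2Nat.id.
have HN : t <= INR N by lra.
have HN3 : INR N <= t + 1 by lra.
have HN2 : (1 < N)%N.
  have : 1 < INR N by lra.
  move=> h; apply/ltP; apply: INR_lt; by rewrite /=.
have sk := @sketchable_main n F w theta m HL Hm2 Hm N HN HN2.
have Rk := Rlin_le _ _ _ _ sk.
apply: Rle_trans (_ : INR #|{: 'I_(B N) * 'I_(Kc N).+1 * 'I_(r N)}| <= _).
  by apply: le_INR; apply/leP.
rewrite !card_prod !card_ord !mult_INR /B /Kc /r.
have hr := @r_bound N t t2 HN3 (ltnW HN2).
rewrite (S_INR (N * N.+1)) mult_INR S_INR.
set L := ln t in hr |- *.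
set Nr := INR N in HN HN3 |- *.
set rr := INR (trunc_log 2 (6 * N)).+1 in hr |- *.
have e6 : INR 6 = 6 by rewrite /=; lra.
rewrite (_ : INR 5 + 1 = 6); last by rewrite /=; lra.
rewrite (S_INR N) -/Nr.
have Nb : Nr <= 1.5 * t by lra.
have N0 : 0 <= Nr by lra.
have r0 : 0 <= rr by apply: pos_INR.
have A1 : 6 * Nr * Nr * (Nr * (Nr + 1) + 1) <= 54 * t ^ 4.
  have h1 : Nr * Nr <= 2.25 * t ^ 2 by nra.
  have h2 : Nr * (Nr + 1) + 1 <= 4 * t ^ 2 by nra.
  have h3 : 0 <= Nr * Nr by nra.
  have h4 : 0 <= Nr * (Nr + 1) + 1 by nra.
  have := Rmult_le_compat _ _ _ _ h3 h4 h1 h2.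
  nra.
have A2 : 0 <= 6 * Nr * Nr * (Nr * (Nr + 1) + 1) by nra.
have := Rmult_le_compat _ _ _ _ A2 r0 A1 hr.
nra.
Qed.
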